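(* Consider the network $\Sigma$ and nonempty closed sets $\mathcal{A}_i\subset\mathbb{R}^{n_i}$, $i\in\mathbb{N}$. Assume there are $\kappa_1,\kappa_2\in\mathcal{K}_\infty$ such that one of the following two conditions holds for all $i\in\mathbb{N}$, all $\xi_i\in\mathbb{R}^{n_i}$, $\bar\xi_i\in X(I_i)$ and $\mu_i\in\mathbb{R}^{p_i}$: (a) $|f_i(\xi_i,\bar\xi_i,\mu_i)|_{\mathcal{A}_i}\le\kappa_1(|\xi_i|_{\mathcal{A}_i})+\kappa_2(|\bar\xi_i|)+\kappa_2(|\mu_i|)$; (b) $|f_i(\xi_i,\bar\xi_i,\mu_i)|_{\mathcal{A}_i}\le\kappa_1(|\xi_i|_{\mathcal{A}_i})+\kappa_2(|\bar\xi_i|_{\mathcal{A}(I_i)})+\kappa_2(|\mu_i|)$. Assume further that $(\mathcal{A}_i)_{i\in\mathbb{N}}$ is uniformly bounded, i.e. there is $C>0$ with $|z|\le C$ for all $i\in\mathbb{N}$ and all $z\in\mathcal{A}_i$. Then $\Sigma$ is well-posed.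
   Context: For each $i\in\mathbb{N}$ fix positive integers $n_i,p_i$, norms $|\cdot|$ on $\mathbb{R}^{n_i}$, $\mathbb{R}^{p_i}$, and a finite set $I_i\subset\mathbb{N}\setminus\{i\}$ such that every set $\{j\in\mathbb{N}:i\in I_j\}$ is finite. $X(I_i):=\prod_{j\in I_i}\mathbb{R}^{n_j}$ with norm $|\bar x_i|:=\sup_{j\in I_i}|x_j|$. Each $f_i:\mathbb{R}^{n_i}\times X(I_i)\times\mathbb{R}^{p_i}\to\mathbb{R}^{n_i}$ is continuous. $X$ (resp. $U$) is the space of sequences $(x_i)_{i\in\mathbb{N}}$, $x_i\in\mathbb{R}^{n_i}$ (resp. $(u_i)$, $u_i\in\mathbb{R}^{p_i}$), with $\sup_i|x_i|<\infty$, normed by $|x|_\infty=\sup_i|x_i|$. $f:\prod_i\mathbb{R}^{n_i}\times U\to\prod_i\mathbb{R}^{n_i}$ is $f(x,u)_i=f_i(x_i,(x_j)_{j\in I_i},u_i)$; the network $\Sigma$ is $x^+=f(x,u)$, and it is well-posed if $f(x,u)\in X$ for all $x\in X$, $u\in U$. $|z|_{\mathcal{A}_i}:=\inf_{y\in\mathcal{A}_i}|z-y|$; $\mathcal{A}(I_i):=\prod_{j\in I_i}\mathcal{A}_j$ and $|\bar\xi_i|_{\mathcal{A}(I_i)}:=\inf_{z\in\mathcal{A}(I_i)}|\bar\xi_i-z|$ (which equals $\max_{j\in I_i}|\xi_j|_{\mathcal{A}_j}$). $\mathcal{K}_\infty$: continuous strictly increasing unbounded functions $[0,\infty)\to[0,\infty)$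 vanishing at $0$. *)

(* Defs.v *)
From HB Require Import structures.
From mathcomp Require Import all_boot all_order all_algebra.
From mathcomp Require Import all_classical all_reals all_analysis.
Import Order.TTheory GRing.Theory Num.Theory.
Import numFieldNormedType.Exports.
Set Implicit Arguments. Unset Strict Implicit. Unset Printing Implicit Defensive.
Local Open Scope classical_set_scope.
Local Open Scope ring_scope.

Section NetworkDefs.
Context {R : realType}.

Definition is_norm (m : nat) (N : 'rV[R]_m -> R) : Prop :=
  [/\ (forall x, 0 <= N x), (forall x, N x = 0 -> x = 0),
      (forall (a : R) x, N (a *: x) = `|a| * N x) &
      (forall x y, N (x + y) <= N x + N y)].

Definition dist_set (m : nat) (N : 'rV[R]_m -> R) (A : set 'rV[R]_m)
  (z : 'rV[R]_m) : R := inf [set N (z - y) | y in A].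

(* class K_infinity, functions [0,oo) -> [0,oo) (given on R, only values on
   [0,oo) matter) *)
Definition K_inf (k : R -> R) : Prop :=
  [/\ k 0 = 0, {within [set x : R | 0 <= x], continuous k},
      (forall x y, 0 <= x -> x < y -> k x < k y) &
      (forall M, exists x, 0 <= x /\ M < k x)].

Definition XI (n : nat -> nat) (I : nat -> seq nat) (i : nat) : Type :=
  forall j : seq_sub (I i), 'rV[R]_(n (val j)).

(* |xb|  = sup_{j in I_i} |x_j| (0 if I_i is empty) *)
Definition XI_norm (n : nat -> nat) (I : nat -> seq nat)
  (N : forall i, 'rV[R]_(n i) -> R) (i : nat) (xb : XI n I i) : R :=
  \big[Num.max/0]_(j : seq_sub (I i)) N (val j) (xb j).

Definition XI_dist (n : nat -> nat) (I : nat -> seq nat)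
  (N : forall i, 'rV[R]_(n i) -> R) (A : forall i, set 'rV[R]_(n i))
  (i : nat) (xb : XI n I i) : R :=
  inf [set XI_norm N (fun j => xb j - z j) |
       z in [set z : XI n I i | forall j, A (val j) (z j)]].

(* continuity of f_i (with respect to the given norms; all norms on a
   finite-dimensional space induce the standard topology) *)
Definition fi_continuous (n p : nat -> nat) (I : nat -> seq nat)
  (N : forall i, 'rV[R]_(n i) -> R) (Nu : forall i, 'rV[R]_(p i) -> R)
  (i : nat) (fi : 'rV[R]_(n i) -> XI n I i -> 'rV[R]_(p i) -> 'rV[R]_(n i))
  : Prop :=
  forall x xb u (eps : R), 0 < eps -> exists2 d : R, 0 < d &
    forall x' xb' u', N i (x' - x) < d ->
      XI_norm N (fun j => xb' j - xb j) < d -> Nu i (u' - u) < d ->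
      N i (fi x' xb' u' - fi x xb u) < eps.

Definition netf (n p : nat -> nat) (I : nat -> seq nat)
  (f : forall i, 'rV[R]_(n i) -> XI n I i -> 'rV[R]_(p i) -> 'rV[R]_(n i))
  (x : forall i, 'rV[R]_(n i)) (u : forall i, 'rV[R]_(p i)) :
  forall i, 'rV[R]_(n i) :=
  fun i => f i (x i) (fun j => x (val j)) (u i).

(* membership in the l^infty-type spaces X and U *)
Definition bounded_seq (m : nat -> nat) (N : forall i, 'rV[R]_(m i) -> R)
  (x : forall i, 'rV[R]_(m i)) : Prop :=
  exists M : R, forall i, N i (x i) <= M.

Definition well_posed (n p : nat -> nat) (I : nat -> seq nat)
  (N : forall i, 'rV[R]_(n i) -> R) (Nu : forall i, 'rV[R]_(p i) -> R)
  (f : forall i, 'rV[R]_(n i) -> XI n I i -> 'rV[R]_(p i) -> 'rV[R]_(n i))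
  : Prop :=
  forall x u, bounded_seq N x -> bounded_seq Nu u -> bounded_seq N (netf f x u).

End NetworkDefs.

(* Main.v *)
Require Import Defs.
From mathcomp Require Import all_boot all_order all_algebra.
From mathcomp Require Import all_classical all_reals all_analysis.
Import Order.TTheory GRing.Theory Num.Theory.
Import numFieldNormedType.Exports.
Local Open Scope classical_set_scope.
Local Open Scope ring_scope.

Set Implicit Arguments. Unset Strict Implicit.
Section H.
Variable R : realType.

Lemma Kmono (k : R -> R) a b : K_inf k -> 0 <= a -> a <= b -> k a <= k b.
Proof.
case=> _ _ hk _ ha; rewrite le_eqVlt => /orP [/eqP -> //|hab].
by apply/ltW/hk.
Qed.

Lemma inf_nonneg (S : set R) : (forall x, S x -> 0 <= x) -> 0 <= inf S.
Proof.
move=> hS; have [[y Sy]|/set0P/negP] := pselect (S !=set0).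
  by apply: lb_le_inf; [exists y| move=> z /hS].
by rewrite negbK => /eqP ->; rewrite inf0.
Qed.

Lemma inf_le_elt (S : set R) x : (forall x, S x -> 0 <= x) -> S x -> inf S <= x.
Proof. by move=> hS Sx; apply: ge_inf => //; exists 0 => z /hS. Qed.

Lemma dist_set_ge m (Nm : 'rV[R]_m -> R) (A : set 'rV[R]_m) z C :
  is_norm Nm -> A !=set0 -> (forall y, A y -> Nm y <= C) ->
  Nm z <= dist_set Nm A z + C.
Proof.
case=> N0 _ _ Ntr hA hC; rewrite -lerBlDr; apply: lb_le_inf.
  by case: hA => y Ay; exists (Nm (z - y)), y.
move=> _ [y Ay <-]; rewrite lerBlDr.
apply: (le_trans _ (lerD (lexx _) (hC _ Ay))).
by rewrite -{1}(subrK y z) Ntr.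
Qed.

Lemma dist_set_nonneg m (Nm : 'rV[R]_m -> R) (A : set 'rV[R]_m) z :
  is_norm Nm -> 0 <= dist_set Nm A z.
Proof. by case=> N0 _ _ _; apply: inf_nonneg => _ [y _ <-]. Qed.

Lemma dist_set_le m (Nm : 'rV[R]_m -> R) (A : set 'rV[R]_m) z C :
  is_norm Nm -> A !=set0 -> (forall y, A y -> Nm y <= C) ->
  dist_set Nm A z <= Nm z + C.
Proof.
move=> hN [y Ay] hC; case: (hN) => N0 _ Nsc Ntr.
have h1 : dist_set Nm A z <= Nm (z - y).
  by apply: inf_le_elt; [move=> _ [w _ <-] | exists y].
apply: (le_trans h1).
apply: (le_trans (Ntr _ _)); rewrite lerD2l.
have -> : - y = (-1) *: y by rewrite scaleN1r.
by rewrite Nsc normrN normr1 mul1r hC.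
Qed.

Lemma bigmax_bound (T : finType) (F : T -> R) M : 0 <= M ->
  (forall j, 0 <= F j <= M) -> 0 <= \big[Num.max/0]_(j : T) F j <= M.
Proof.
move=> M0 hF; apply: (big_ind (fun v => 0 <= v <= M)) => //.
  by rewrite lexx.
move=> a b /andP[a0 aM] /andP[b0 bM].
by rewrite le_max a0 ge_max aM bM.
Qed.
Lemma normN m (Nm : 'rV[R]_m -> R) y : is_norm Nm -> Nm (- y) = Nm y.
Proof.
case=> _ _ Nsc _; have -> : - y = (-1) *: y by rewrite scaleN1r.
by rewrite Nsc normrN normr1 mul1r.
Qed.
End H.

Theorem lemma4 (R : realType) (n p : nat -> nat)
  (N : forall i, 'rV[R]_(n i) -> R) (Nu : forall i, 'rV[R]_(p i) -> R)
  (I : nat -> seq nat)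
  (f : forall i, 'rV[R]_(n i) -> XI n I i -> 'rV[R]_(p i) -> 'rV[R]_(n i))
  (A : forall i, set 'rV[R]_(n i)) :
  (forall i, (0 < n i)%N) -> (forall i, (0 < p i)%N) ->
  (forall i, is_norm (N i)) -> (forall i, is_norm (Nu i)) ->
  (forall i, i \notin I i) ->
  (forall i, finite_set [set j | i \in I j]) ->
  (forall i, fi_continuous N Nu (f i)) ->
  (forall i, A i !=set0) -> (forall i, closed (A i)) ->
  (exists k1 k2 : R -> R, K_inf k1 /\ K_inf k2 /\
     ((forall i x xb u,
        dist_set (N i) (A i) (f i x xb u) <=
          k1 (dist_set (N i) (A i) x) + k2 (XI_norm N xb) + k2 (Nu i u)) \/
      (forall i x xb u,
        dist_set (N i) (A i) (f i x xb u) <=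
          k1 (dist_set (N i) (A i) x) + k2 (XI_dist N A xb) + k2 (Nu i u)))) ->
  (exists2 C : R, 0 < C & forall i z, A i z -> N i z <= C) ->
  well_posed N Nu f.
Proof.
move=> _ _ hN hNu _ _ _ hA _ [k1 [k2 [K1 [K2 hf]]]] [C C0 hC] x u [Mx hx] [Mu hu].
have Mx0 : 0 <= Mx by apply: le_trans (hx 0); case: (hN 0).
have Mu0 : 0 <= Mu by apply: le_trans (hu 0); case: (hNu 0).
have MC0 : 0 <= Mx + C by rewrite addr_ge0 // ltW.
exists (k1 (Mx + C) + k2 (Mx + C) + k2 Mu + C) => i.
rewrite /netf.
apply: le_trans; first apply: (@dist_set_ge _ _ _ _ _ _ (hN i) (hA i) (hC i)).
rewrite lerD2r.
have d1 : k1 (dist_set (N i) (A i) (x i)) <= k1 (Mx + C).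
  apply: Kmono => //; first exact: dist_set_nonneg.
  by apply: (le_trans (@dist_set_le _ _ _ _ _ _ (hN i) (hA i) (hC i))); rewrite lerD2r.
have d3 : k2 (Nu i (u i)) <= k2 Mu.
  by apply: Kmono => //; case: (hNu i).
set xb : XI n I i := fun j => x (val j).
case: hf => hf; apply: (le_trans (hf i _ xb _)); rewrite !lerD //; apply: Kmono => //.
- by case/andP: (@bigmax_bound R _ (fun j : seq_sub (I i) => N (val j) (xb j)) _ Mx0
     (fun j => ltac:(apply/andP; split; [case: (hN (val j)) => // | exact: hx]))).
- case/andP: (@bigmax_bound R _ (fun j : seq_sub (I i) => N (val j) (xb j)) _ Mx0
     (fun j => ltac:(apply/andP; split; [case: (hN (val j)) => // | exact: hx]))).
  by move=> _ h; apply: (le_trans h); rewrite lerDl ltW.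
- apply: inf_nonneg => _ [z _ <-].
  apply: (big_ind (fun v => 0 <= v)) => //; first by move=> a b a0 b0; rewrite le_max a0.
  by move=> j _; case: (hN (val j)).
- have hz : forall j : seq_sub (I i), {y | A (val j) y} := fun j => cid (hA (val j)).
  pose z : XI n I i := fun j => sval (hz j).
  have h1 : XI_dist N A xb <= XI_norm N (fun j => xb j - z j).
    apply: inf_le_elt; last by exists z => // j; exact: svalP (hz j).
    move=> _ [w _ <-]; apply: (big_ind (fun v => 0 <= v)) => //; first by move=> a b a0 b0; rewrite le_max a0.
    by move=> j _; case: (hN (val j)).
  apply: (le_trans h1).
  have hb : forall j : seq_sub (I i), 0 <= N (val j) (xb j - z j) <= Mx + C.
    move=> j; case: (hN (val j)) => N0 _ _ Ntr; rewrite N0 /=.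
    apply: (le_trans (Ntr _ _)); rewrite normN //; apply: lerD; first exact: hx.
    exact: hC (svalP (hz j)).
  by case/andP: (@bigmax_bound R _ (fun j : seq_sub (I i) => N (val j) (xb j - z j)) _ MC0 hb).
Qed.
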